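(* Let $\mathcal{A}$ be a Banach algebra (real or complex) with nonzero identity $e$, and let $x\in\mathcal{A}$ be such that the partial sums $\sum_{j=0}^n x^j$, $n\ge0$, are uniformly bounded in norm. Then for $0\le r<1$ the series $\sum_{j=0}^\infty r^j x^j$ converges absolutely and equals $(e-rx)^{-1}$, these inverses are bounded in norm uniformly in $r\in[0,1)$, and $e-x$ is invertible in $\mathcal{A}$.
   Context: A Banach algebra is an associative algebra $\mathcal{A}$ over $\mathbb{R}$ or $\mathbb{C}$ with nonzero multiplicative identity $e$, complete with respect to a norm satisfying $\|ab\|\le\|a\|\,\|b\|$ and $\|e\|=1$. Powers are $x^0=e$, $x^{j+1}=x^jx$. *)

(* Defs.v *)
From Stdlib Require Import Reals.
Open Scope R_scope.

Record BanachAlgebra := {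
  car :> Type;
  add : car -> car -> car;
  zero : car;
  opp : car -> car;
  scal : R -> car -> car;
  mul : car -> car -> car;
  one : car;
  norm : car -> R;
  add_assoc : forall a b c, add a (add b c) = add (add a b) c;
  add_comm : forall a b, add a b = add b a;
  add_zero : forall a, add a zero = a;
  add_opp : forall a, add a (opp a) = zero;
  scal_assoc : forall s t a, scal s (scal t a) = scal (s * t) a;
  scal_one : forall a, scal 1 a = a;
  scal_distr_l : forall s a b, scal s (add a b) = add (scal s a) (scal s b);
  scal_distr_r : forall s t a, scal (s + t) a = add (scal s a) (scal t a);
  mul_assoc : forall a b c, mul a (mul b c) = mul (mul a b) c;
  mul_one_l : forall a, mul one a = a;
  mul_one_r : forall a, mul a one = a;
  mul_add_l : forall a b c, mul (add a b) c = add (mul a c) (mul b c);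
  mul_add_r : forall a b c, mul a (add b c) = add (mul a b) (mul a c);
  mul_scal_l : forall s a b, mul (scal s a) b = scal s (mul a b);
  mul_scal_r : forall s a b, mul a (scal s b) = scal s (mul a b);
  one_neq_zero : one <> zero;
  norm_nonneg : forall a, 0 <= norm a;
  norm_eq_zero : forall a, norm a = 0 -> a = zero;
  norm_zero : norm zero = 0;
  norm_triangle : forall a b, norm (add a b) <= norm a + norm b;
  norm_scal : forall s a, norm (scal s a) = Rabs s * norm a;
  norm_mul : forall a b, norm (mul a b) <= norm a * norm b;
  norm_one : norm one = 1;
  complete : forall u : nat -> car,
    (forall eps, eps > 0 -> exists N, forall m n, (m >= N)%nat -> (n >= N)%nat ->
        norm (add (u m) (opp (u n))) < eps) ->
    exists l, forall eps, eps > 0 -> exists N, forall n, (n >= N)%nat ->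
        norm (add (u n) (opp l)) < eps
}.

Arguments add {_} _ _. Arguments zero {_}. Arguments opp {_} _. Arguments scal {_} _ _.
Arguments mul {_} _ _. Arguments one {_}. Arguments norm {_} _.

Definition sub {A : BanachAlgebra} (a b : A) : A := add a (opp b).

Fixpoint powA {A : BanachAlgebra} (x : A) (n : nat) : A :=
  match n with
  | O => one
  | S j => mul (powA x j) x
  end.

Fixpoint sumA {A : BanachAlgebra} (f : nat -> A) (n : nat) : A :=
  match n with
  | O => f O
  | S j => add (sumA f j) (f (S j))
  end.

Definition cvA {A : BanachAlgebra} (u : nat -> A) (l : A) : Prop :=
  forall eps, eps > 0 -> exists N, forall n, (n >= N)%nat -> norm (sub (u n) l) < eps.

Definition is_inverse {A : BanachAlgebra} (a y : A) : Prop :=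
  mul a y = one /\ mul y a = one.

(* Main.v *)
Require Import Defs.
From Stdlib Require Import Reals Lra Lia.
Open Scope R_scope.

Arguments add_assoc {_} _ _ _. Arguments add_comm {_} _ _. Arguments add_zero {_} _.
Arguments add_opp {_} _. Arguments scal_assoc {_} _ _ _. Arguments scal_one {_} _.
Arguments scal_distr_l {_} _ _ _. Arguments scal_distr_r {_} _ _ _.
Arguments mul_assoc {_} _ _ _. Arguments mul_one_l {_} _. Arguments mul_one_r {_} _.
Arguments mul_add_l {_} _ _ _. Arguments mul_add_r {_} _ _ _.
Arguments mul_scal_l {_} _ _ _. Arguments mul_scal_r {_} _ _ _.
Arguments norm_nonneg {_} _. Arguments norm_eq_zero {_} _ _. Arguments norm_triangle {_} _ _.
Arguments norm_scal {_} _ _. Arguments norm_mul {_} _ _.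
Section Alg.
Variable A : BanachAlgebra.
Implicit Types a b c u v : A.

Lemma add_zero_l a : add zero a = a.
Proof. rewrite add_comm; apply add_zero. Qed.

Lemma add_cancel_l a b c : add a b = add a c -> b = c.
Proof.
  intro H. rewrite <- (add_zero_l b), <- (add_zero_l c).
  rewrite <- (add_opp a), (add_comm a (opp a)), <- !add_assoc, H. reflexivity.
Qed.

Lemma opp_unique a b : add a b = zero -> b = opp a.
Proof. intro H. apply (add_cancel_l a). rewrite H, add_opp. reflexivity. Qed.

Lemma opp_opp a : opp (opp a) = a.
Proof. symmetry. apply opp_unique. rewrite add_comm; apply add_opp. Qed.

Lemma opp_add a b : opp (add a b) = add (opp a) (opp b).
Proof.
  symmetry. apply opp_unique.
  rewrite (add_comm (opp a) (opp b)), add_assoc, <- (add_assoc a b), add_opp, add_zero, add_opp.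
  reflexivity.
Qed.

Lemma opp_zero : opp (@zero A) = zero.
Proof. symmetry; apply opp_unique; apply add_zero. Qed.

Lemma mul_zero_l a : mul zero a = zero.
Proof.
  apply (add_cancel_l (mul zero a)). rewrite add_zero, <- mul_add_l, add_zero. reflexivity.
Qed.

Lemma mul_zero_r a : mul a zero = zero.
Proof.
  apply (add_cancel_l (mul a zero)). rewrite add_zero, <- mul_add_r, add_zero. reflexivity.
Qed.

Lemma mul_opp_r a b : mul a (opp b) = opp (mul a b).
Proof. apply opp_unique. rewrite <- mul_add_r, add_opp, mul_zero_r. reflexivity. Qed.

Lemma mul_opp_l a b : mul (opp a) b = opp (mul a b).
Proof. apply opp_unique. rewrite <- mul_add_l, add_opp, mul_zero_l. reflexivity. Qed.

Lemma mul_sub_r c u v : mul c (sub u v) = sub (mul c u) (mul c v).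
Proof. unfold sub. rewrite mul_add_r, mul_opp_r. reflexivity. Qed.

Lemma mul_sub_l c u v : mul (sub u v) c = sub (mul u c) (mul v c).
Proof. unfold sub. rewrite mul_add_l, mul_opp_l. reflexivity. Qed.

Lemma sub_tele a b c : add (sub a b) (sub b c) = sub a c.
Proof.
  unfold sub. rewrite <- add_assoc, (add_assoc (opp b)), (add_comm (opp b) b), add_opp, add_zero_l.
  reflexivity.
Qed.

Lemma add_sub_cancel a b : add b (sub a b) = a.
Proof. unfold sub. rewrite add_assoc, (add_comm b a), <- add_assoc, add_opp, add_zero. reflexivity. Qed.

Lemma sub_diag a : sub a a = zero.
Proof. apply add_opp. Qed.

Lemma scal_zero_l a : scal 0 a = zero.
Proof.
  apply (add_cancel_l (scal 0 a)). rewrite add_zero, <- scal_distr_r, Rplus_0_r. reflexivity.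
Qed.

Lemma scal_opp a : scal (-1) a = opp a.
Proof.
  apply opp_unique. rewrite <- (scal_one a) at 1. rewrite <- scal_distr_r.
  replace (1 + -1) with 0 by ring. apply scal_zero_l.
Qed.

Lemma norm_opp a : norm (opp a) = norm a.
Proof. rewrite <- scal_opp, norm_scal, Rabs_left by lra. ring. Qed.

Lemma sub_sym_norm a b : norm (sub a b) = norm (sub b a).
Proof.
  rewrite <- norm_opp. f_equal. unfold sub. rewrite opp_add, opp_opp, add_comm. reflexivity.
Qed.

Lemma sub_zero_eq a b : sub a b = zero -> a = b.
Proof. intro H. unfold sub in H. rewrite <- (opp_opp b). apply opp_unique.
  rewrite add_comm. exact H. Qed.

Lemma sub_add_sub a b c : sub a c = add (sub a b) (sub b c).
Proof. symmetry; apply sub_tele. Qed.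

Lemma scal_mul_comm s a b : mul (scal s a) b = mul a (scal s b).
Proof. rewrite mul_scal_l, mul_scal_r. reflexivity. Qed.

Lemma cvA_unique (u : nat -> A) l1 l2 : cvA u l1 -> cvA u l2 -> l1 = l2.
Proof.
  intros H1 H2. apply sub_zero_eq. apply norm_eq_zero.
  apply Rle_antisym; [|apply norm_nonneg].
  apply Rnot_lt_le; intro Hp.
  destruct (H1 (norm (sub l1 l2) / 2)) as [N1 HN1]; [lra|].
  destruct (H2 (norm (sub l1 l2) / 2)) as [N2 HN2]; [lra|].
  specialize (HN1 (N1+N2)%nat ltac:(lia)). specialize (HN2 (N1+N2)%nat ltac:(lia)).
  pose proof (norm_triangle (sub l1 (u (N1+N2)%nat)) (sub (u (N1+N2)%nat) l2)).
  rewrite sub_tele in H. rewrite (sub_sym_norm l1 (u _)) in H. lra.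
Qed.

Lemma cvA_mul_l c (u : nat -> A) l : cvA u l -> cvA (fun n => mul c (u n)) (mul c l).
Proof.
  intros H eps He.
  destruct (H (eps / (norm c + 1))) as [N HN].
  { apply Rdiv_lt_0_compat; [lra|]. pose proof (norm_nonneg c). lra. }
  exists N. intros n Hn. rewrite <- mul_sub_r.
  eapply Rle_lt_trans; [apply norm_mul|].
  pose proof (norm_nonneg c). pose proof (HN n Hn).
  pose proof (norm_nonneg (sub (u n) l)).
  apply Rle_lt_trans with ((norm c + 1) * norm (sub (u n) l)).
  { apply Rmult_le_compat_r; lra. }
  apply Rmult_lt_reg_l with (/ (norm c + 1)). { apply Rinv_0_lt_compat; lra. }
  rewrite <- Rmult_assoc, Rinv_l by lra. unfold Rdiv in H1. lra.
Qed.

Lemma cvA_mul_r c (u : nat -> A) l : cvA u l -> cvA (fun n => mul (u n) c) (mul l c).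
Proof.
  intros H eps He.
  destruct (H (eps / (norm c + 1))) as [N HN].
  { apply Rdiv_lt_0_compat; [lra|]. pose proof (norm_nonneg c). lra. }
  exists N. intros n Hn. rewrite <- mul_sub_l.
  eapply Rle_lt_trans; [apply norm_mul|].
  pose proof (norm_nonneg c). pose proof (HN n Hn).
  pose proof (norm_nonneg (sub (u n) l)).
  apply Rle_lt_trans with ((norm c + 1) * norm (sub (u n) l)).
  { nra. }
  apply Rmult_lt_reg_l with (/ (norm c + 1)). { apply Rinv_0_lt_compat; lra. }
  rewrite <- Rmult_assoc, Rinv_l by lra. unfold Rdiv in H1. lra.
Qed.

Lemma cvA_ext (u v : nat -> A) l : (forall n, u n = v n) -> cvA u l -> cvA v l.
Proof. intros E H eps He. destruct (H eps He) as [N HN]. exists N. intros n Hn.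
  rewrite <- E. auto. Qed.

Lemma cvA_bound (u : nat -> A) l M : cvA u l -> (forall n, norm (u n) <= M) -> norm l <= M.
Proof.
  intros H B. apply Rnot_lt_le; intro Hp.
  destruct (H (norm l - M)) as [N HN]; [lra|].
  specialize (HN N (le_n _)). specialize (B N).
  pose proof (norm_triangle (u N) (sub l (u N))).
  rewrite add_sub_cancel in H0.
  rewrite sub_sym_norm in H0. lra.
Qed.
End Alg.

Section Neu.
Variable A : BanachAlgebra.
Implicit Types a b c u v : A.

Lemma pow_comm a n : mul a (powA a n) = powA a (S n).
Proof.
  induction n; simpl.
  - rewrite mul_one_r, mul_one_l. reflexivity.
  - rewrite mul_assoc. simpl in IHn. rewrite IHn. reflexivity.
Qed.

Lemma norm_pow_le a n : norm (powA a n) <= norm a ^ n.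
Proof.
  induction n; simpl.
  - rewrite norm_one. lra.
  - eapply Rle_trans; [apply norm_mul|]. rewrite Rmult_comm.
    apply Rmult_le_compat_l; [apply norm_nonneg|exact IHn].
Qed.

Lemma pow_scal r a n : powA (scal r a) n = scal (r ^ n) (powA a n).
Proof.
  induction n; simpl.
  - rewrite scal_one. reflexivity.
  - rewrite IHn, mul_scal_l, mul_scal_r, scal_assoc. f_equal. ring.
Qed.

Lemma sumA_ext (f g : nat -> A) n : (forall j, f j = g j) -> sumA f n = sumA g n.
Proof. intro E. induction n; simpl; rewrite ?IHn, ?E; reflexivity. Qed.

Lemma sub_add_l a b c : sub (add a b) c = add (sub a c) b.
Proof. unfold sub. rewrite <- !add_assoc, (add_comm b). reflexivity. Qed.

Lemma sub_sub_self a b : sub (sub a b) a = opp b.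
Proof. unfold sub. rewrite <- add_assoc, (add_comm (opp b)), add_assoc, add_opp, add_zero_l. reflexivity. Qed.

Lemma geom_id_l a n : mul (sub one a) (sumA (powA a) n) = sub one (powA a (S n)).
Proof.
  induction n.
  - simpl. rewrite mul_one_r, mul_one_l. reflexivity.
  - change (sumA (powA a) (S n)) with (add (sumA (powA a) n) (powA a (S n))).
    rewrite mul_add_r, IHn, mul_sub_l, mul_one_l, pow_comm, sub_tele. reflexivity.
Qed.

Lemma geom_id_r a n : mul (sumA (powA a) n) (sub one a) = sub one (powA a (S n)).
Proof.
  induction n.
  - simpl. rewrite !mul_one_l. reflexivity.
  - change (sumA (powA a) (S n)) with (add (sumA (powA a) n) (powA a (S n))).
    rewrite mul_add_l, IHn, mul_sub_r, mul_one_r, sub_tele. reflexivity.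
Qed.

Lemma sumA_diff (f : nat -> A) n k :
  norm (sub (sumA f (n + k)) (sumA f n)) <=
  sum_f_R0 (fun j => norm (f j)) (n + k) - sum_f_R0 (fun j => norm (f j)) n.
Proof.
  induction k.
  - rewrite Nat.add_0_r, sub_diag, norm_zero. lra.
  - rewrite Nat.add_succ_r. change (sumA f (S (n + k))) with (add (sumA f (n + k)) (f (S (n+k)))).
    rewrite tech5, sub_add_l.
    eapply Rle_trans; [apply norm_triangle|]. lra.
Qed.

Lemma Un_cv_ext (u v : nat -> R) l : (forall n, u n = v n) -> Un_cv u l -> Un_cv v l.
Proof. intros E H eps He. destruct (H eps He) as [N HN]. exists N. intros n Hn.
  rewrite <- E. auto. Qed.

Lemma neumann a C q : 0 <= q < 1 -> (forall j, norm (powA a j) <= C * q ^ j) ->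
  (exists s, Un_cv (sum_f_R0 (fun j => norm (powA a j))) s) /\
  exists z, cvA (sumA (powA a)) z /\ is_inverse (sub one a) z.
Proof.
  intros Hq HC.
  assert (HC1 : 1 <= C). { specialize (HC O). simpl in HC. rewrite norm_one in HC. lra. }
  assert (Hgeo : {l | Un_cv (fun N => sum_f_R0 (fun n => C * q ^ n) N) l}).
  { exists (C * / (1 - q)).
    pose proof (GP_infinite q ltac:(rewrite Rabs_pos_eq; lra)) as G.
    assert (Hc : Un_cv (fun _ => C) C). { intros e He. exists O. intros. unfold Rdist. rewrite Rminus_diag, Rabs_R0. lra. }
    pose proof (CV_mult _ _ _ _ Hc G) as G2.
    eapply Un_cv_ext; [|exact G2]. intro n. simpl.
    rewrite scal_sum. apply sum_eq. intros. ring. }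
  destruct (Rseries_CV_comp (fun j => norm (powA a j)) _ (fun n => conj (norm_nonneg _) (HC n)) Hgeo) as [s Hs].
  split. { exists s. exact Hs. }
  assert (Hcau := CV_Cauchy _ (exist _ s Hs)).
  assert (Hcv : exists z, cvA (sumA (powA a)) z).
  { destruct (complete A (sumA (powA a))) as [z Hz].
    - intros eps He. destruct (Hcau eps He) as [N HN]. exists N. intros m n Hm Hn.
      destruct (Nat.le_ge_cases n m) as [Hnm|Hnm].
      + replace m with (n + (m - n))%nat by lia.
        eapply Rle_lt_trans; [apply sumA_diff|].
        specialize (HN (n + (m - n))%nat n ltac:(lia) Hn). unfold Rdist in HN.
        eapply Rle_lt_trans; [apply Rle_abs|exact HN].
      + change (add (sumA (powA a) m) (opp (sumA (powA a) n))) with (sub (sumA (powA a) m) (sumA (powA a) n)).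
        rewrite sub_sym_norm.
        replace n with (m + (n - m))%nat by lia.
        eapply Rle_lt_trans; [apply sumA_diff|].
        specialize (HN (m + (n - m))%nat m ltac:(lia) Hm). unfold Rdist in HN.
        eapply Rle_lt_trans; [apply Rle_abs|exact HN].
    - exists z. exact Hz. }
  destruct Hcv as [z Hz]. exists z. split; [exact Hz|].
  assert (Hone : cvA (fun n => sub one (powA a (S n))) one).
  { intros eps He.
    destruct (pow_lt_1_zero q ltac:(rewrite Rabs_pos_eq; lra) (eps / C)) as [N HN].
    { apply Rdiv_lt_0_compat; lra. }
    exists N. intros n Hn.
    rewrite sub_sub_self, norm_opp.
    eapply Rle_lt_trans; [apply HC|].
    specialize (HN (S n) ltac:(lia)). rewrite Rabs_pos_eq in HN by (apply pow_le; lra).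
    apply Rmult_lt_reg_l with (/ C). { apply Rinv_0_lt_compat; lra. }
    rewrite <- Rmult_assoc, Rinv_l by lra. unfold Rdiv in HN. lra. }
  split.
  - apply (cvA_unique _ (fun n => mul (sub one a) (sumA (powA a) n))).
    + apply cvA_mul_l. exact Hz.
    + eapply cvA_ext; [|exact Hone]. intro n. symmetry; apply geom_id_l.
  - apply (cvA_unique _ (fun n => mul (sumA (powA a) n) (sub one a))).
    + apply cvA_mul_r. exact Hz.
    + eapply cvA_ext; [|exact Hone]. intro n. symmetry; apply geom_id_r.
Qed.
End Neu.

Lemma inv_mul (A : BanachAlgebra) (P Q y w : A) :
  is_inverse P y -> is_inverse Q w -> is_inverse (mul P Q) (mul w y).
Proof.
  intros [H1 H2] [H3 H4]. split.
  - rewrite <- mul_assoc, (mul_assoc Q w), H3, mul_one_l. exact H1.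
  - rewrite <- mul_assoc, (mul_assoc y P), H2, mul_one_l. exact H4.
Qed.

Lemma inv_unique (A : BanachAlgebra) (P y z : A) :
  is_inverse P y -> is_inverse P z -> y = z.
Proof.
  intros [H1 H2] [H3 H4].
  rewrite <- (mul_one_r y), <- H3, mul_assoc, H2, mul_one_l. reflexivity.
Qed.

Lemma sub_sub (A : BanachAlgebra) (a b c : A) : sub (sub a b) c = sub a (add b c).
Proof. unfold sub. rewrite opp_add, add_assoc. reflexivity. Qed.

Lemma sub_add_cancel2 (A : BanachAlgebra) (a b : A) : sub (add a b) a = b.
Proof. rewrite sub_add_l, sub_diag, add_zero_l. reflexivity. Qed.

Lemma abel (A : BanachAlgebra) (x : A) M r : 0 <= r <= 1 ->
  (forall n, norm (sumA (fun j => powA x j) n) <= M) ->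
  forall n, norm (sumA (fun j => scal (r ^ j) (powA x j)) n) <= M.
Proof.
  intros Hr HM.
  set (Sx := fun n => sumA (fun j => powA x j) n).
  set (U := fun n => sumA (fun j => scal (r ^ j - r ^ (S j)) (Sx j)) n).
  assert (HT : forall n, sumA (fun j => scal (r ^ j) (powA x j)) n = add (U n) (scal (r ^ (S n)) (Sx n))).
  { induction n.
    - unfold U, Sx; simpl. rewrite <- scal_distr_r. f_equal. ring.
    - change (sumA (fun j => scal (r ^ j) (powA x j)) (S n)) with
        (add (sumA (fun j => scal (r ^ j) (powA x j)) n) (scal (r ^ (S n)) (powA x (S n)))).
      rewrite IHn. unfold U. change (sumA (fun j => scal (r ^ j - r ^ S j) (Sx j)) (S n))
        with (add (sumA (fun j => scal (r ^ j - r ^ S j) (Sx j)) n) (scal (r ^ S n - r ^ S (S n)) (Sx (S n)))).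
      rewrite <- !add_assoc. f_equal.
      rewrite <- scal_distr_l, <- scal_distr_r.
      replace (r ^ S n - r ^ S (S n) + r ^ S (S n)) with (r ^ S n) by ring.
      reflexivity. }
  assert (HM0 : 0 <= M). { eapply Rle_trans; [apply (norm_nonneg (Sx O))|apply (HM O)]. }
  assert (HU : forall n, norm (U n) <= M * (1 - r ^ (S n))).
  { assert (Hc : forall j, 0 <= r ^ j - r ^ S j).
    { intro j. simpl. pose proof (pow_le r j ltac:(lra)). nra. }
    induction n.
    - unfold U; simpl. rewrite norm_scal, Rabs_pos_eq by lra. assert (H : norm (Sx O) <= M) by apply HM. nra.
    - change (U (S n)) with (add (U n) (scal (r ^ S n - r ^ S (S n)) (Sx (S n)))).
      eapply Rle_trans; [apply norm_triangle|].
      rewrite norm_scal, Rabs_pos_eq by apply Hc.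
      assert (H : norm (Sx (S n)) <= M) by apply HM.
      pose proof (Hc (S n)).
      assert (norm (Sx (S n)) * (r ^ S n - r ^ S (S n)) <= M * (r ^ S n - r ^ S (S n))) by nra.
      nra. }
  intro n. rewrite HT. eapply Rle_trans; [apply norm_triangle|].
  rewrite norm_scal, Rabs_pos_eq by (apply pow_le; lra).
  pose proof (HU n). assert (H0 : norm (Sx n) <= M) by apply HM.
  pose proof (pow_le r (S n) ltac:(lra)).
  assert (r ^ S n * norm (Sx n) <= r ^ S n * M) by nra.
  nra.
Qed.

Theorem mainTheorem6 (A : BanachAlgebra) (x : A)
  (Hbdd : exists M : R, forall n : nat, norm (sumA (fun j => powA x j) n) <= M) :
  (forall r : R, 0 <= r < 1 ->
     (exists s : R, Un_cv (sum_f_R0 (fun j => norm (scal (r ^ j) (powA x j)))) s) /\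
     (exists y : A, cvA (sumA (fun j => scal (r ^ j) (powA x j))) y /\
                    is_inverse (sub one (scal r x)) y)) /\
  (exists M : R, forall (r : R) (y : A), 0 <= r < 1 ->
     is_inverse (sub one (scal r x)) y -> norm y <= M) /\
  (exists y : A, is_inverse (sub one x) y).
Proof.
  destruct Hbdd as [M HM].
  assert (HM1 : 1 <= M).
  { specialize (HM O). simpl in HM. rewrite norm_one in HM. exact HM. }
  assert (Hx : forall j, norm (powA x j) <= 2 * M).
  { intros [|j].
    - simpl. rewrite norm_one. lra.
    - assert (E : powA x (S j) = sub (sumA (fun j => powA x j) (S j)) (sumA (fun j => powA x j) j)).
      { simpl sumA at 1. rewrite sub_add_cancel2. reflexivity. }
      rewrite E. unfold sub. eapply Rle_trans; [apply norm_triangle|].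
      rewrite norm_opp. pose proof (HM (S j)). pose proof (HM j). lra. }
  assert (P1 : forall r : R, 0 <= r < 1 ->
     (exists s : R, Un_cv (sum_f_R0 (fun j => norm (scal (r ^ j) (powA x j)))) s) /\
     (exists y : A, cvA (sumA (fun j => scal (r ^ j) (powA x j))) y /\
                    is_inverse (sub one (scal r x)) y)).
  { intros r Hr.
    destruct (neumann A (scal r x) (2 * M) r Hr) as [[s Hs] [z [Hz Hinv]]].
    { intro j. rewrite pow_scal, norm_scal, Rabs_pos_eq by (apply pow_le; lra).
      pose proof (Hx j). pose proof (pow_le r j ltac:(lra)). nra. }
    split.
    - exists s. eapply Un_cv_ext; [|exact Hs]. intro n. apply sum_eq. intros. rewrite pow_scal. reflexivity.
    - exists z. split; [|exact Hinv]. eapply cvA_ext; [|exact Hz]. intro n. apply sumA_ext. intro j. apply pow_scal. }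
  assert (P2 : forall (r : R) (y : A), 0 <= r < 1 ->
     is_inverse (sub one (scal r x)) y -> norm y <= M).
  { intros r y Hr Hy. destruct (P1 r Hr) as [_ [z [Hz Hinv]]].
    rewrite (inv_unique _ _ _ _ Hy Hinv).
    apply (cvA_bound _ _ _ _ Hz). apply abel; [lra|exact HM]. }
  split; [exact P1|]. split; [exists M; exact P2|].
  set (K := M * norm x + 1).
  assert (HK : 1 <= K). { unfold K. pose proof (norm_nonneg x). nra. }
  set (r := 1 - / (2 * K)).
  assert (Hr1 : 0 < / (2 * K) <= 1/2).
  { split. apply Rinv_0_lt_compat; lra.
    apply Rmult_le_reg_l with (2 * K); [lra|]. rewrite Rinv_r by lra. lra. }
  assert (Hr : 0 <= r < 1) by (unfold r; lra).
  destruct (P1 r Hr) as [_ [z [_ Hinv]]].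
  pose proof (P2 r z Hr Hinv) as Hzn.
  set (a := scal (1 - r) (mul z x)).
  assert (Ha : norm a < 1).
  { unfold a. rewrite norm_scal, Rabs_pos_eq by lra.
    pose proof (norm_mul z x). pose proof (norm_nonneg x). pose proof (norm_nonneg (mul z x)).
    assert (norm (mul z x) <= M * norm x) by nra.
    assert ((1 - r) * K = 1/2).
    { unfold r. replace (1 - (1 - / (2 * K))) with (/ (2*K)) by ring. field. lra. }
    assert ((1 - r) * norm (mul z x) <= (1 - r) * (M * norm x)) by nra.
    unfold K in H3. nra. }
  destruct (neumann A a 1 (norm a) (conj (norm_nonneg a) Ha)) as [_ [w [_ Hw]]].
  { intro j. rewrite Rmult_1_l. apply norm_pow_le. }
  exists (mul w z).
  replace (sub one x) with (mul (sub one (scal r x)) (sub one a)).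
  - apply inv_mul; assumption.
  - rewrite mul_sub_r, mul_one_r. unfold a.
    rewrite mul_scal_r, mul_assoc. destruct Hinv as [Hi _]. rewrite Hi, mul_one_l.
    rewrite sub_sub, <- scal_distr_r. replace (r + (1 - r)) with 1 by ring.
    rewrite scal_one. reflexivity.
Qed.
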